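(* Let $q$ be a prime power, let $G$ be the incidence graph of a projective plane of order $q$, let $e_0=v_0v_1$ be an edge of $G$, and let $\hat G$ be the graph obtained from two disjoint copies $G^{(1)},G^{(2)}$ of $G$ by deleting the two copies of $e_0$ and adding the edges $v_0^{(1)}v_1^{(2)}$ and $v_0^{(2)}v_1^{(1)}$. Then $\sqrt{q-1}-1<R(\hat G)<\sqrt{q}-1$, and the real number $R(\hat G)$ is a root of $\lambda^3+(1-q)\lambda^2-3q\lambda+q^2-q$ lying in this interval.
   Context: For a graph $H$ of order $n$ with adjacency eigenvalues $\lambda_1\geqslant\cdots\geqslant\lambda_n$, the HL-index is $R(H)=\max\{|\lambda_{\lfloor (n+1)/2\rfloor}|,\ |\lambda_{\lceil (n+1)/2\rceil}|\}$. The incidence graph of a projective plane is the bipartite graph whose two parts are the points and the lines, a point being adjacent to a line iff it lies on it; for order $q$ it is $(q+1)$-regular with $2(q^2+q+1)$ vertices. *)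

(* Defs.v *)
From HB Require Import structures.
From mathcomp Require Import all_boot all_order all_algebra all_field.
Set Implicit Arguments. Unset Strict Implicit. Unset Printing Implicit Defensive.
Import Order.TTheory GRing.Theory Num.Theory.
Local Open Scope ring_scope.

Definition adj_mx (V : finType) (e : rel V) : 'M[algC]_#|V| :=
  \matrix_(i, j) (e (enum_val i) (enum_val j))%:R.

(* The eigenvalues (with multiplicity) of A, listed in non-increasing order
   (by real part; eigenvalues of symmetric real matrices are real). *)
Definition eigenvalues n (A : 'M[algC]_n) : seq algC :=
  sort (fun x y : algC => 'Re y <= 'Re x)
       (projT1 (closed_field_poly_normal (char_poly A))).

(* HL-index: max(|lambda_{floor((n+1)/2)}|, |lambda_{ceil((n+1)/2)}|),
   eigenvalues 1-indexed in non-increasing order. *)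
Definition HL_index n (A : 'M[algC]_n) : algC :=
  let s := eigenvalues A in
  Num.max `|s`_((n.+1 %/ 2)%N.-1)| `|s`_((n.+2 %/ 2)%N.-1)|.

Definition proj_plane (q : nat) (P L : finType) (inc : P -> L -> bool) : Prop :=
  [/\ (forall p p' : P, p != p' -> #|[set l | inc p l && inc p' l]| = 1%N),
      (forall l l' : L, l != l' -> #|[set p | inc p l && inc p l']| = 1%N),
      (forall l : L, #|[set p | inc p l]| = q.+1) &
      (forall p : P, #|[set l | inc p l]| = q.+1)].

(* Vertices of G-hat: (copy, vertex of incidence graph); copies indexed by bool. *)
Definition hatV (P L : finType) := (bool * (P + L))%type.

(* G-hat: two copies of the incidence graph, each with the edge p0 l0 deleted,
   plus the edges p0^(c) l0^(~c). *)
Definition hatG (P L : finType) (inc : P -> L -> bool) (p0 : P) (l0 : L)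
    (x y : hatV P L) : bool :=
  let ed (c : bool) (p : P) (c' : bool) (l : L) :=
    if (p == p0) && (l == l0) then c != c' else (c == c') && inc p l in
  match x, y with
  | (c, inl p), (c', inr l) => ed c p c' l
  | (c, inr l), (c', inl p) => ed c' p c l
  | _, _ => false
  end.

(* Main.v *)
Require Import Defs.
From HB Require Import structures.
From mathcomp Require Import all_boot all_order all_algebra all_field.
From mathcomp Require Import ring lra.
Import Order.TTheory GRing.Theory Num.Theory.
Local Open Scope ring_scope.
Set Implicit Arguments. Unset Strict Implicit. Unset Printing Implicit Defensive.
Lemma hl_sort (s : seq algC) (k : nat) (r : algC) :
  size s = (k.*2)%N ->
  (forall z, z \in s -> z \is Creal) ->
  (forall z, z \in s -> r <= `|z|) -> 0 < r -> r \in s -> -r \in s ->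
  count (fun z => 0 < z) s = k ->
  let s' := sort (fun x y : algC => 'Re y <= 'Re x) s in
  Num.max `|s'`_k.-1| `|s'`_k| = r.
Proof.
move=> hsz hre hab r0 rs nrs hcnt s'.
set leT := (fun x y : algC => 'Re y <= 'Re x).
have tot : total leT by move=> x y; rewrite /leT; apply: real_leVge; apply: Creal_Re.
have tr : transitive leT by move=> x y z; rewrite /leT => h1 h2; apply: le_trans h2 h1.
have rf : reflexive leT by move=> x; rewrite /leT.
have so : sorted leT s' := sort_sorted tot s.
have pe : perm_eq s' s by rewrite perm_sort.
have sz' : size s' = (k.*2)%N by rewrite size_sort.
have mem' : s' =i s by apply: perm_mem.
have cnt' : count (fun z => 0 < z) s' = k by rewrite (permP pe).
have re' i : (i < size s')%N -> s'`_i \is Creal.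
  by move=> hi; apply: hre; rewrite -mem'; apply: mem_nth.
have ReE' i : (i < size s')%N -> 'Re s'`_i = s'`_i.
  by move=> hi; apply/Creal_ReP/re'.
have mono i j : (i <= j < size s')%N -> s'`_j <= s'`_i.
  move=> /andP[ij jn]; have := sorted_leq_nth tr rf 0 so.
  move=> /(_ i j); rewrite !inE (leq_ltn_trans ij jn) jn => /(_ isT isT ij).
  by rewrite /leT ReE' // ReE'// (leq_ltn_trans ij jn).
have nz i : (i < size s')%N -> s'`_i != 0.
  move=> hi; have : s'`_i \in s by rewrite -mem'; apply: mem_nth.
  move/hab => h; apply/eqP => h0; move: h; rewrite h0 normr0.
  by move=> /(lt_le_trans r0); rewrite ltxx.
have k0 : (0 < k)%N.
  case: k hsz {cnt' sz' hcnt} => // hsz.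
  by move: rs; rewrite -[s]/s; case: s hsz {hre hab nrs so pe mem' re' ReE' mono nz s'}.
have kn : (k < size s')%N by rewrite sz' -addnn -{1}(addn0 k) ltn_add2l.
have k1n : (k.-1 < size s')%N by apply: leq_ltn_trans kn; apply: leq_pred.
have pos1 : 0 < s'`_k.-1.
  rewrite real_ltNge ?re' // ?real0 //; apply/negP => hle.
  have : (count (fun z : algC => (0 < z)%R) s' <= k.-1)%N.
    rewrite -(cat_take_drop k.-1 s') count_cat.
    have -> : count (fun z => 0 < z) (drop k.-1 s') = 0%N.
      apply/eqP; rewrite -leqn0 leqNgt -has_count; apply/hasPn => x.
      move=> /(nthP 0) [j]; rewrite size_drop nth_drop => hj <-.
      apply/negP => h; have : s'`_(k.-1 + j) <= s'`_k.-1.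
        by apply: mono; rewrite leq_addr /= -ltn_subRL.
      by move=> /le_trans /(_ hle) /(lt_le_trans h); rewrite ltxx.
    by rewrite addn0; apply: leq_trans (count_size _ _) _; rewrite size_take k1n.
  by rewrite cnt'; case: (k) k0 => [|n] //= _; rewrite ltnn.
have neg0 : s'`_k < 0.
  rewrite real_ltNge ?re' // ?real0 //; apply/negP => hle.
  have : (k.+1 <= count (fun z : algC => (0 < z)%R) s')%N.
    rewrite -(cat_take_drop k.+1 s') count_cat.
    apply: leq_trans (leq_addr _ _).
    have -> : count (fun z => 0 < z) (take k.+1 s') = k.+1.
      apply/eqP; rewrite -[X in _ == X](size_takel kn) -all_count.
      apply/(all_nthP 0) => j; rewrite size_takel // => hj.
      rewrite nth_take //; rewrite lt_def nz ?(leq_trans hj) //=.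
      by apply: le_trans hle _; apply: mono; rewrite -ltnS hj.
    by [].
  by rewrite cnt' ltnn.
have [j jn sj] : exists2 j, (j < size s')%N & s'`_j = r.
  by exists (index r s'); rewrite ?nth_index ?index_mem ?mem'.
have [j' jn' sj'] : exists2 j, (j < size s')%N & s'`_j = -r.
  by exists (index (-r) s'); rewrite ?nth_index ?index_mem ?mem'.
have jk : (j <= k.-1)%N.
  rewrite leqNgt; apply/negP => hj.
  have : s'`_j <= s'`_k by apply: mono; rewrite jn andbT; case: (k) k0 hj.
  by rewrite sj => /le_lt_trans /(_ neg0) /(lt_trans r0); rewrite ltxx.
have jk' : (k <= j')%N.
  rewrite leqNgt; apply/negP => hj.
  have : s'`_k.-1 <= s'`_j' by apply: mono; rewrite k1n andbT -ltnS; case: (k) k0 hj.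
  rewrite sj' => h; have := lt_le_trans pos1 h; rewrite oppr_gt0 => /lt_trans/(_ r0).
  by rewrite ltxx.
have e1 : `|s'`_k.-1| = r.
  apply/eqP; rewrite eq_le hab ?andbT -?mem' ?mem_nth //.
  by rewrite gtr0_norm // -sj; apply: mono; rewrite jk.
have e2 : `|s'`_k| = r.
  apply/eqP; rewrite eq_le hab ?andbT -?mem' ?mem_nth //.
  rewrite ltr0_norm // lerNl -sj'; apply: mono; rewrite jk' //.
by rewrite e1 e2 maxxx.
Qed.
Definition mcub (q mu : algC) : algC :=
  mu ^+ 3 - (q ^+ 2 + 4 * q + 1) * mu ^+ 2 + (2 * q ^+ 3 + 5 * q ^+ 2 + 2 * q) * mu
  - q ^+ 2 * (q - 1) ^+ 2.

Lemma sum_delta (X : finType) (i0 : X) (f : X -> algC) :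
  \sum_i (i == i0)%:R * f i = f i0.
Proof.
rewrite (bigD1 i0) //= eqxx mul1r big1 ?addr0 // => i /negPf ->.
by rewrite mul0r.
Qed.

Lemma sum_delta_r (X : finType) (i0 : X) (f : X -> algC) :
  \sum_i f i * (i == i0)%:R = f i0.
Proof. by rewrite -(sum_delta i0 f); apply: eq_bigr => i _; rewrite mulrC. Qed.

Lemma sum_lin (X : finType) (i0 : X) (x u : X -> algC) (a b c d : algC) :
  \sum_i (a * x i + b + c * (i == i0)%:R + d * u i) =
  a * \sum_i x i + b * #|X|%:R + c + d * \sum_i u i.
Proof.
rewrite !big_split /= -!mulr_sumr sumr_const.
have hd : \sum_i ((i == i0)%:R : algC) = 1.
  rewrite -[RHS](sum_delta i0 (fun _ => 1)); apply: eq_bigr => i _; rewrite mulr1 //.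
by rewrite hd mulr1 mulr_natr.
Qed.

Lemma gram_cubic (X : finType) (i0 : X) (u x : X -> algC) (q mu : algC) :
  u i0 = 1 -> \sum_i u i = q + 1 -> \sum_i u i * u i = q + 1 ->
  #|X|%:R = q ^+ 2 + q + 1 ->
  (forall i, mu * x i = q * x i + \sum_j x j
       + (4 * x i0 - 2 * (\sum_j u j * x j)) * (i == i0)%:R + (- 2 * x i0) * u i) ->
  mu != q -> mcub q mu != 0 -> forall i, x i = 0.
Proof.
move=> hu0 hsu hsu2 hN H nq nm.
set S := \sum_j x j; set U := \sum_j u j * x j; set t := x i0.
have E1 : mu * t = q * t + S + (4 * t - 2 * U) - 2 * t.
  rewrite /t H eqxx hu0 -/S -/U /=; ring.
have E3 : mu * S = q * S + S * (q ^+ 2 + q + 1) + (4 * t - 2 * U) - 2 * t * (q + 1).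
  rewrite /S mulr_sumr (eq_bigr _ (fun i _ => H i)).
  rewrite (sum_lin i0 x u) hN hsu -/S -/U /t; ring.
have E2 : mu * U = q * U + S * (q + 1) + (4 * t - 2 * U) - 2 * t * (q + 1).
  rewrite /U mulr_sumr.
  rewrite (eq_bigr (fun i => q * (u i * x i) + S * u i + (4 * t - 2 * U) * (u i * (i == i0)%:R) - 2 * t * (u i * u i))); last first.
    by move=> i _; rewrite mulrCA H -/S -/U /t; ring.
  rewrite !big_split /= -!mulr_sumr.
  by rewrite sum_delta_r hu0 mulr1 hsu sumrN -mulr_sumr hsu2.
have e1 : (mu - q - 2) * t + 2 * U - S = 0.
  by move: E1 => /eqP; rewrite -subr_eq0 => /eqP <-; ring.
have e2 : (2 * q - 2) * t + (mu - q + 2) * U - (q + 1) * S = 0.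
  by move: E2 => /eqP; rewrite -subr_eq0 => /eqP <-; ring.
have e3 : (2 * q - 2) * t + 2 * U + (mu - q - (q ^+ 2 + q + 1)) * S = 0.
  by move: E3 => /eqP; rewrite -subr_eq0 => /eqP <-; ring.
have t0 : t = 0.
  suff h : mcub q mu * t = 0 by move/eqP: h; rewrite mulf_eq0 (negPf nm) => /eqP.
  have -> : mcub q mu * t =
    (- q + q ^+ 3 + mu - 3 * mu * q - mu * q ^+ 2 + mu ^+ 2) *
       ((mu - q - 2) * t + 2 * U - S)
    + (4 * q + 2 * q ^+ 2 - 2 * mu) * ((2 * q - 2) * t + (mu - q + 2) * U - (q + 1) * S)
    + (- 3 * q + mu) * ((2 * q - 2) * t + 2 * U + (mu - q - (q ^+ 2 + q + 1)) * S).
    by rewrite /mcub; ring.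
  by rewrite e1 e2 e3 !mulr0 !addr0.
have U0 : U = 0.
  suff h : mcub q mu * U = 0 by move/eqP: h; rewrite mulf_eq0 (negPf nm) => /eqP.
  have -> : mcub q mu * U =
    (- 2 * q + 2 * q ^+ 3 + 2 * mu - 2 * mu * q) * ((mu - q - 2) * t + 2 * U - S)
    + (7 * q + 4 * q ^+ 2 + q ^+ 3 - 3 * mu - 3 * mu * q - mu * q ^+ 2 + mu ^+ 2)
       * ((2 * q - 2) * t + (mu - q + 2) * U - (q + 1) * S)
    + (- 5 * q - q ^+ 2 + mu + mu * q)
       * ((2 * q - 2) * t + 2 * U + (mu - q - (q ^+ 2 + q + 1)) * S).
    by rewrite /mcub; ring.
  by rewrite e1 e2 e3 !mulr0 !addr0.
have S0 : S = 0.
  by move: e1; rewrite t0 U0 !mulr0 !add0r => /eqP; rewrite oppr_eq0 => /eqP.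
move=> i; have := H i; rewrite -/S -/U -/t t0 U0 S0 !mulr0 !mul0r subrr mul0r !addr0.
move=> /eqP; rewrite -subr_eq0 -mulrBl mulf_eq0 subr_eq0 (negPf nq) /=.
by move/eqP.
Qed.

Lemma gram_plain (X : finType) (x : X -> algC) (q mu : algC) :
  #|X|%:R = q ^+ 2 + q + 1 ->
  (forall i, mu * x i = q * x i + \sum_j x j) ->
  mu != q -> mu != (q + 1) ^+ 2 -> forall i, x i = 0.
Proof.
move=> hN H nq nq1.
set S := \sum_j x j.
have E : mu * S = q * S + S * #|X|%:R.
  by rewrite /S mulr_sumr (eq_bigr _ (fun i _ => H i)) big_split /= -mulr_sumr sumr_const mulr_natr.
have S0 : S = 0.
  move: E; rewrite hN => /eqP; rewrite -subr_eq0.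
  have -> : mu * S - (q * S + S * (q ^+ 2 + q + 1)) = (mu - (q + 1) ^+ 2) * S by ring.
  by rewrite mulf_eq0 subr_eq0 (negPf nq1) => /eqP.
move=> i; have := H i; rewrite -/S S0 addr0 => /eqP; rewrite -subr_eq0 -mulrBl.
by rewrite mulf_eq0 subr_eq0 (negPf nq) => /eqP.
Qed.

Lemma bip_sq (X Y : finType) (b : X -> Y -> algC) (x : X -> algC) (y : Y -> algC) (z : algC) :
  (forall i, z * x i = \sum_j b i j * y j) ->
  (forall j, z * y j = \sum_i b i j * x i) ->
  forall i, z ^+ 2 * x i = \sum_i' (\sum_j b i j * b i' j) * x i'.
Proof.
move=> hx hy i; rewrite expr2 -mulrA hx mulr_sumr.
rewrite (eq_bigr (fun j => \sum_i' b i j * b i' j * x i')); last first.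
  by move=> j _; rewrite mulrCA hy mulr_sumr; apply: eq_bigr => i' _; rewrite mulrA.
rewrite exchange_big /=; apply: eq_bigr => i' _; rewrite mulr_suml //.
Qed.
Lemma sum_card (Y : finType) (p : pred Y) :
  \sum_y ((p y)%:R : algC) = (#|[set y | p y]|)%:R.
Proof.
rewrite -natr_sum; congr (_ %:R); rewrite cardsE -sum1_card big_mkcond /=.
by rewrite [RHS]big_mkcond; apply: eq_bigr => y _; rewrite unfold_in; case: (p y).
Qed.

Section Incidence.
Variables (X Y : finType) (I : X -> Y -> bool) (q : nat).
Hypothesis A1 : forall x x', x != x' -> #|[set y | I x y && I x' y]| = 1%N.
Hypothesis A2 : forall x, #|[set y | I x y]| = q.+1.
Hypothesis A3 : forall y, #|[set x | I x y]| = q.+1.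

Lemma gramI x x' :
  \sum_y ((I x y)%:R * (I x' y)%:R : algC) = q%:R * (x' == x)%:R + 1.
Proof.
rewrite (eq_bigr (fun y => ((I x y && I x' y))%:R)); last first.
  by move=> y _; rewrite -natrM mulnb.
rewrite sum_card; have [->|nx] := eqVneq x' x.
  have -> : [set y | I x y && I x y] = [set y | I x y].
    by apply/setP => y; rewrite !inE andbb.
  rewrite mulr1.
  by rewrite A2 -addn1 natrD.
by rewrite A1 ?mulr0 ?add0r // eq_sym.
Qed.

Lemma cardI (x0 : X) : (#|X|%:R : algC) = q%:R ^+ 2 + q%:R + 1.
Proof.
have h1 : \sum_x \sum_y ((I x y)%:R * (I x0 y)%:R : algC) = q%:R + #|X|%:R.
  rewrite (eq_bigr (fun x => (q%:R * (x0 == x)%:R + 1 : algC))); last by move=> x _; rewrite gramI.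
  rewrite big_split /= -mulr_sumr sumr_const.
  rewrite (eq_bigr (fun x => ((x == x0)%:R * 1 : algC))); last first.
    by move=> x _; rewrite mulr1 eq_sym.
  by rewrite sum_delta mulr1.
have h2 : \sum_x \sum_y ((I x y)%:R * (I x0 y)%:R : algC) = (q%:R + 1) * (q%:R + 1).
  rewrite exchange_big /=.
  rewrite (eq_bigr (fun y => ((I x0 y)%:R * (q%:R + 1) : algC))).
    rewrite -mulr_suml sum_card A2 -addn1 natrD //.
  move=> y _; rewrite -mulr_suml mulrC; congr (_ * _).
  by rewrite sum_card A3 -addn1 natrD.
move: h1; rewrite h2 => h; apply: (@addrI _ q%:R); rewrite -h; ring.
Qed.

Definition Bm (x0 : X) (y0 : Y) (i : X) (j : Y) : algC :=
  (I i j)%:R - 2 * (i == x0)%:R * (j == y0)%:R.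

Lemma side_sym (x0 : X) (x : X -> algC) (y : Y -> algC) (z : algC) :
  (forall i, z * x i = \sum_j (I i j)%:R * y j) ->
  (forall j, z * y j = \sum_i (I i j)%:R * x i) ->
  (exists i, x i != 0) ->
  z ^+ 2 = q%:R \/ z ^+ 2 = (q%:R + 1) ^+ 2.
Proof.
move=> hx hy [i1 hi1].
have H := bip_sq hx hy.
have H' : forall i, z ^+ 2 * x i = q%:R * x i + \sum_j x j.
  move=> i; rewrite H.
  rewrite (eq_bigr (fun i' => q%:R * (x i' * (i' == i)%:R) + x i')); last first.
    by move=> i' _; rewrite gramI; ring.
  by rewrite big_split /= -mulr_sumr sum_delta_r.
have [e1|n1] := eqVneq (z ^+ 2) q%:R; first by left.
have [e2|n2] := eqVneq (z ^+ 2) ((q%:R + 1) ^+ 2); first by right.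
by move: hi1; rewrite (gram_plain (cardI x0) H' n1 n2) eqxx.
Qed.

Lemma gram_apply (x0 : X) (y0 : Y) (x : X -> algC) i :
  \sum_i' (\sum_j Bm x0 y0 i j * Bm x0 y0 i' j) * x i' =
  q%:R * x i + \sum_j x j
  + (4 * x x0 - 2 * (\sum_j (I j y0)%:R * x j)) * (i == x0)%:R + (- 2 * x x0) * (I i y0)%:R.
Proof.
set u := fun i => ((I i y0)%:R : algC).
have G i1 i' : \sum_j Bm x0 y0 i1 j * Bm x0 y0 i' j =
    q%:R * (i' == i1)%:R + 1 - 2 * (i1 == x0)%:R * u i' - 2 * (i' == x0)%:R * u i1
    + 4 * (i1 == x0)%:R * (i' == x0)%:R.
  rewrite /Bm (eq_bigr (fun j => (I i1 j)%:R * (I i' j)%:R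
     + (- 2 * (i1 == x0)%:R) * ((I i' j)%:R * (j == y0)%:R)
     + (- 2 * (i' == x0)%:R) * ((I i1 j)%:R * (j == y0)%:R)
     + (4 * (i1 == x0)%:R * (i' == x0)%:R) * ((j == y0)%:R * (j == y0)%:R))); last first.
    by move=> j _; ring.
  rewrite !big_split /= -!mulr_sumr !sum_delta_r gramI eqxx /u /=; ring.
rewrite (eq_bigr (fun i' => q%:R * (x i' * (i' == i)%:R) + x i'
   + (- 2 * (i == x0)%:R) * (u i' * x i') + (- 2 * u i) * (x i' * (i' == x0)%:R)
   + (4 * (i == x0)%:R) * (x i' * (i' == x0)%:R))); last first.
  by move=> i' _; rewrite G; ring.
rewrite !big_split /= -!mulr_sumr !sum_delta_r /u; ring.
Qed.

Lemma side_anti (x0 : X) (y0 : Y) (hI : I x0 y0) (x : X -> algC) (y : Y -> algC) (z : algC) :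
  (forall i, z * x i = \sum_j Bm x0 y0 i j * y j) ->
  (forall j, z * y j = \sum_i Bm x0 y0 i j * x i) ->
  (exists i, x i != 0) ->
  z ^+ 2 = q%:R \/ mcub q%:R (z ^+ 2) = 0.
Proof.
move=> hx hy [i1 hi1].
have H := bip_sq hx hy.
set u := fun i => ((I i y0)%:R : algC).
have H' : forall i, z ^+ 2 * x i = q%:R * x i + \sum_j x j
       + (4 * x x0 - 2 * (\sum_j u j * x j)) * (i == x0)%:R + (- 2 * x x0) * u i.
  by move=> i; rewrite H gram_apply.
have [e1|n1] := eqVneq (z ^+ 2) q%:R; first by left.
have [e2|n2] := eqVneq (mcub q%:R (z ^+ 2)) 0; first by right.
have hu0 : u x0 = 1 by rewrite /u hI.
have hsu : \sum_i u i = q%:R + 1 by rewrite /u sum_card A3 -addn1 natrD.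
have hsu2 : \sum_i u i * u i = q%:R + 1.
  by rewrite -hsu; apply: eq_bigr => i _; rewrite /u -natrM mulnb andbb.
by move: hi1; rewrite (gram_cubic hu0 hsu hsu2 (cardI x0) H' n1 n2) eqxx.
Qed.

End Incidence.
Section Hat.
Variables (q : nat) (P L : finType) (inc : P -> L -> bool).
Variables (p0 : P) (l0 : L).
Hypothesis He : inc p0 l0.

Local Notation V := (bool * (P + L))%type.
Local Notation e := (hatG inc p0 l0).
Local Notation M := (adj_mx (hatG inc p0 l0)).

Lemma hatG_sym x y : e x y = e y x.
Proof. by case: x => c [p|l]; case: y => c' [p'|l']. Qed.

Lemma sum_hatV (F : V -> algC) :
  \sum_x F x = \sum_c (\sum_p F (c, inl p) + \sum_l F (c, inr l)).
Proof.
have -> : \sum_c (\sum_p F (c, inl p) + \sum_l F (c, inr l)) =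
  \sum_c \sum_(w : P + L) F (c, w).
  by apply: eq_bigr => c _; rewrite big_sumType.
by rewrite pair_big /=; apply: eq_bigr => -[].
Qed.

Lemma eigen_fun (v : 'rV[algC]_#|{: V}|) (z : algC) :
  v *m M = z *: v ->
  forall y : V, \sum_x v 0 (enum_rank x) * (e x y)%:R = z * v 0 (enum_rank y).
Proof.
move=> hv y; move/matrixP: hv => /(_ 0 (enum_rank y)); rewrite !mxE => <-.
rewrite (reindex enum_rank) /=; last by apply: onW_bij; apply: enum_rank_bij.
by apply: eq_bigr => x _; rewrite !mxE !enum_rankK.
Qed.


Variable (f : V -> algC) (z : algC).

Lemma lhsX c p : \sum_x f x * (e x (c, inl p))%:R = \sum_l
   (f (true, inr l) * (if (p == p0) && (l == l0) then c != true else (c == true) && inc p l)%:R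
  + f (false, inr l) * (if (p == p0) && (l == l0) then c != false else (c == false) && inc p l)%:R).
Proof.
have z0 c' : \sum_p1 f (c', inl p1) * 0 = 0 by apply: big1 => i _; rewrite mulr0.
by rewrite sum_hatV big_bool /= !z0 !add0r big_split.
Qed.

Lemma lhsY c l : \sum_x f x * (e x (c, inr l))%:R = \sum_p
   (f (true, inl p) * (if (p == p0) && (l == l0) then true != c else (true == c) && inc p l)%:R
  + f (false, inl p) * (if (p == p0) && (l == l0) then false != c else (false == c) && inc p l)%:R).
Proof.
have z0 c' : \sum_l1 f (c', inr l1) * 0 = 0 by apply: big1 => i _; rewrite mulr0.
by rewrite sum_hatV big_bool /= !z0 !addr0 big_split.
Qed.

Lemma dd0 (p : P) (l : L) : ((p == p0)%:R * (l == l0)%:R : algC) = ((p == p0) && (l == l0))%:R.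
Proof. by rewrite -natrM mulnb. Qed.

Lemma lhsX_anti c p : (forall w, f (false, w) = - f (true, w)) ->
  \sum_x f x * (e x (c, inl p))%:R =
  (if c then 1 else -1) * \sum_l Bm inc p0 l0 p l * f (true, inr l).
Proof.
move=> hA; rewrite lhsX mulr_sumr; apply: eq_bigr => l _; rewrite hA /Bm -mulrA dd0.
have [/andP[/eqP-> /eqP->]|nE] := boolP ((p == p0) && (l == l0)).
  by rewrite He; case: c => /=; ring.
by case: (inc p l); case: c => /=; ring.
Qed.

Lemma lhsY_anti c l : (forall w, f (false, w) = - f (true, w)) ->
  \sum_x f x * (e x (c, inr l))%:R =
  (if c then 1 else -1) * \sum_p Bm inc p0 l0 p l * f (true, inl p).
Proof.
move=> hA; rewrite lhsY mulr_sumr; apply: eq_bigr => p _; rewrite hA /Bm -mulrA dd0.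
have [/andP[/eqP-> /eqP->]|nE] := boolP ((p == p0) && (l == l0)).
  by rewrite He; case: c => /=; ring.
by case: (inc p l); case: c => /=; ring.
Qed.

Hypothesis hf : forall y, \sum_x f x * (e x y)%:R = z * f y.

Lemma hxP c p : z * f (c, inl p) = \sum_l
   (f (true, inr l) * (if (p == p0) && (l == l0) then c != true else (c == true) && inc p l)%:R
  + f (false, inr l) * (if (p == p0) && (l == l0) then c != false else (c == false) && inc p l)%:R).
Proof. by rewrite -hf lhsX. Qed.

Lemma hyP c l : z * f (c, inr l) = \sum_p
   (f (true, inl p) * (if (p == p0) && (l == l0) then true != c else (true == c) && inc p l)%:R
  + f (false, inl p) * (if (p == p0) && (l == l0) then false != c else (false == c) && inc p l)%:R).
Proof. by rewrite -hf lhsY. Qed.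

Lemma dd (p : P) (l : L) : ((p == p0)%:R * (l == l0)%:R : algC) = ((p == p0) && (l == l0))%:R.
Proof. by rewrite -natrM mulnb. Qed.

Lemma symX p : z * (f (true, inl p) + f (false, inl p)) =
  \sum_l (inc p l)%:R * (f (true, inr l) + f (false, inr l)).
Proof.
rewrite mulrDr !hxP -big_split /=; apply: eq_bigr => l _.
have [/andP[/eqP-> /eqP->]|nE] := boolP ((p == p0) && (l == l0)).
  by rewrite He /=; ring.
by case: (inc p l) => /=; ring.
Qed.

Lemma antiX p : z * (f (true, inl p) - f (false, inl p)) =
  \sum_l Bm inc p0 l0 p l * (f (true, inr l) - f (false, inr l)).
Proof.
rewrite mulrBr !hxP -sumrB /=; apply: eq_bigr => l _; rewrite /Bm -mulrA dd.
have [/andP[/eqP-> /eqP->]|nE] := boolP ((p == p0) && (l == l0)).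
  by rewrite He /=; ring.
by case: (inc p l) => /=; ring.
Qed.

Lemma symY l : z * (f (true, inr l) + f (false, inr l)) =
  \sum_p (inc p l)%:R * (f (true, inl p) + f (false, inl p)).
Proof.
rewrite mulrDr !hyP -big_split /=; apply: eq_bigr => p _.
have [/andP[/eqP-> /eqP->]|nE] := boolP ((p == p0) && (l == l0)).
  by rewrite He /=; ring.
by case: (inc p l) => /=; ring.
Qed.

Lemma antiY l : z * (f (true, inr l) - f (false, inr l)) =
  \sum_p Bm inc p0 l0 p l * (f (true, inl p) - f (false, inl p)).
Proof.
rewrite mulrBr !hyP -sumrB /=; apply: eq_bigr => p _; rewrite /Bm -mulrA dd.
have [/andP[/eqP-> /eqP->]|nE] := boolP ((p == p0) && (l == l0)).
  by rewrite He /=; ring.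
by case: (inc p l) => /=; ring.
Qed.

End Hat.
Lemma eigen_main (q : nat) (P L : finType) (inc : P -> L -> bool)
  (HP : proj_plane q inc) (p0 : P) (l0 : L) (He : inc p0 l0)
  (v : 'rV[algC]_#|{: bool * (P + L)}|) (z : algC) :
  v *m adj_mx (hatG inc p0 l0) = z *: v -> v != 0 ->
  [\/ z ^+ 2 = q%:R, z ^+ 2 = (q%:R + 1) ^+ 2 | mcub q%:R (z ^+ 2) = 0].
Proof.
move=> hv vn0; case: HP => A1 A2 A3 A4.
set f := fun x : bool * (P + L) => v 0 (enum_rank x).
have hf := eigen_fun hv; rewrite -/f in hf.
pose xs p := f (true, inl p) + f (false, inl p).
pose ys l := f (true, inr l) + f (false, inr l).
pose xa p := f (true, inl p) - f (false, inl p).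
pose ya l := f (true, inr l) - f (false, inr l).
have sX := symX He hf; have sY := symY He hf.
have aX := antiX He hf; have aY := antiY He hf.
pose I' := fun (l : L) (p : P) => inc p l.
have B1 : forall l l', l != l' -> #|[set p | I' l p && I' l' p]| = 1%N by [].
have B2 : forall l, #|[set p | I' l p]| = q.+1 by [].
have B3 : forall p, #|[set l | I' l p]| = q.+1 by [].
case: (pickP (fun p => xs p != 0)) => [p hp|h1].
  by case: (side_sym A1 A4 A3 p0 sX sY (ex_intro _ p hp)) => ->; [constructor 1|constructor 2].
case: (pickP (fun l => ys l != 0)) => [l hl|h2].
  by case: (@side_sym L P I' q B1 B2 B3 l0 ys xs z sY sX (ex_intro _ l hl)) => ->;
    [constructor 1|constructor 2].
case: (pickP (fun p => xa p != 0)) => [p hp|h3].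
  by case: (side_anti A1 A4 A3 He aX aY (ex_intro _ p hp)) => ->; [constructor 1|constructor 3].
case: (pickP (fun l => ya l != 0)) => [l hl|h4].
  have aY' : forall l, z * ya l = \sum_p Bm I' l0 p0 l p * xa p.
    move=> l'; rewrite aY; apply: eq_bigr => p _; rewrite /Bm /I'; congr (_ * _); ring.
  have aX' : forall p, z * xa p = \sum_l Bm I' l0 p0 l p * ya l.
    move=> p; rewrite aX; apply: eq_bigr => l' _; rewrite /Bm /I'; congr (_ * _); ring.
  by case: (@side_anti L P I' q B1 B2 B3 l0 p0 He ya xa z aY' aX' (ex_intro _ l hl)) => ->;
    [constructor 1|constructor 3].
exfalso; move/negP: vn0; apply; apply/eqP/rowP => i; rewrite mxE.
have -> : v 0 i = f (enum_val i) by rewrite /f enum_valK.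
have two : (2 : algC) != 0 by rewrite pnatr_eq0.
have H c (a b : algC) : a + b = 0 -> a - b = 0 -> (if c then a else b) = 0.
  move=> s d; have h2a : 2 * a = (a + b) + (a - b) by ring.
  rewrite s d addr0 in h2a.
  have ha : a = 0 by move/eqP: h2a; rewrite mulf_eq0 (negPf two) => /eqP.
  by case: c => //; move: s; rewrite ha add0r.
case: (enum_val i) => c [p|l].
  have := H c _ _ (eqP (negbFE (h1 p))) (eqP (negbFE (h3 p))).
  by case: c.
have := H c _ _ (eqP (negbFE (h2 l))) (eqP (negbFE (h4 l))).
by case: c.
Qed.
Lemma sym_real_eig n (A : 'M[algC]_n) (v : 'rV[algC]_n) (z : algC) :
  (forall i j, A i j = A j i) -> (forall i j, (A i j)^* = A i j) ->
  v *m A = z *: v -> v != 0 -> z \is Creal.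
Proof.
move=> hs hr hv vn0.
pose T := \sum_j (v *m A) 0 j * (v 0 j)^*.
pose N := \sum_j `|v 0 j| ^+ 2.
have TN : T = z * N.
  rewrite /T /N mulr_sumr; apply: eq_bigr => j _.
  by rewrite hv mxE normCK mulrA.
have TE : T = \sum_j \sum_i v 0 i * A i j * (v 0 j)^*.
  by apply: eq_bigr => j _; rewrite mxE mulr_suml.
have Treal : T^* = T.
  rewrite TE rmorph_sum /= exchange_big /=; apply: eq_bigr => i _.
  rewrite rmorph_sum /=; apply: eq_bigr => j _.
  by rewrite !rmorphM /= conjCK hr (hs j i); ring.
have Nge : 0 <= N by apply: sumr_ge0 => j _; apply: exprn_ge0.
have Nn0 : N != 0.
  apply/negP => /eqP /psumr_eq0P h; move/negP: vn0; apply.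
  apply/eqP/rowP => j; rewrite mxE; apply/eqP.
  rewrite -normr_eq0 -sqrf_eq0; apply/eqP; apply: h => //.
  by move=> k _; apply: exprn_ge0.
have Nreal : N^* = N by apply/CrealP; apply: ger0_real.
have -> : z = T / N by rewrite TN mulfK.
by apply/CrealP; rewrite fmorph_div /= Treal Nreal.
Qed.
Lemma charpoly_comp_opp n (A : 'M[algC]_n) (sg : 'I_n -> bool) :
  (forall i j, sg i = sg j -> A i j = 0) ->
  char_poly A \Po (- 'X) = (-1) ^+ n * char_poly A.
Proof.
move=> hA.
pose d : 'rV[{poly algC}]_n := \row_i (if sg i then 1 else -1).
pose D := diag_mx d.
have DD : D *m D = 1%:M.
  rewrite mulmx_diag; apply/matrixP => i j; rewrite !mxE.
  by case: (i == j); case: (sg i); rewrite ?mulr1n ?mulr0n ?mulr1 ?mulrNN ?mulr1.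
set C := char_poly_mx A.
have key : map_mx (comp_poly (- 'X)) C = - (D *m C *m D).
  apply/matrixP => i j; rewrite /C /char_poly_mx /D [LHS]mxE [RHS]mxE.
  rewrite mul_mx_diag mul_diag_mx !mxE /=.
  have [->|nij] := eqVneq i j.
    rewrite mulr1n hA // polyC0 subr0 comp_polyX.
    by case: (sg j); ring.
  rewrite /= !mulr0n comp_polyB comp_poly0 comp_polyC !sub0r.
  case e1: (sg i); case e2: (sg j);
    try (rewrite hA ?e1 ?e2 // polyC0 oppr0 !mulr0 ?mul0r oppr0 //); ring.
rewrite /char_poly -/C -det_map_mx key -scaleN1r detZ det_mulmx det_mulmx.
congr (_ * _); rewrite mulrC mulrA -det_mulmx DD det1 mul1r //.
Qed.
Lemma prod_opp_comp (s : seq algC) :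
  (\prod_(z <- s) ('X - z%:P)) \Po (- 'X) =
  (-1) ^+ size s * \prod_(z <- map -%R s) ('X - z%:P).
Proof.
elim: s => [|a s IH]; first by rewrite !big_nil comp_polyC expr0 mulr1.
rewrite /= !big_cons comp_polyM IH comp_polyB comp_polyX comp_polyC exprS polyCN.
ring.
Qed.

Lemma roots_sym (s : seq algC) (p : {poly algC}) :
  p = \prod_(z <- s) ('X - z%:P) ->
  p \Po (- 'X) = (-1) ^+ size s * p -> perm_eq (map -%R s) s.
Proof.
move=> hp hc; apply: prod_XsubC_eq.
have : (-1) ^+ size s * \prod_(z <- map -%R s) ('X - z%:P) = (-1) ^+ size s * p.
  by rewrite -prod_opp_comp -hp.
have h1 : (-1) ^+ size s * (-1) ^+ size s = 1 :> {poly algC}.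
  by rewrite -exprMn mulrNN mulr1 expr1n.
move/(congr1 (fun r => (-1) ^+ size s * r)); rewrite !mulrA h1 !mul1r => ->.
by rewrite hp.
Qed.
Definition cc (R : comNzRingType) (q t : R) : R :=
  t ^+ 3 + (1 - q) * t ^+ 2 - 3 * q * t + q ^+ 2 - q.

Lemma cubic_real (R : rcfType) (q : nat) : (2 <= q)%N ->
  exists r : R, [/\ 0 < r, Num.sqrt (q%:R - 1) - 1 < r, r < Num.sqrt q%:R - 1, cc q%:R r = 0 &
    forall t, cc q%:R t = 0 -> r <= `|t| ].
Proof.
move=> hq.
have q2 : (2 : R) <= q%:R by rewrite (ler_nat R 2 q).
set s := Num.sqrt (q%:R : R); set s1 := Num.sqrt (q%:R - 1 : R).
have s0 : 0 <= s := sqrtr_ge0 _.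
have s10 : 0 <= s1 := sqrtr_ge0 _.
have ss : s ^+ 2 = q%:R by rewrite sqr_sqrtr // ler0n.
have ss1 : s1 ^+ 2 = q%:R - 1 by rewrite sqr_sqrtr // subr_ge0; apply: le_trans q2; rewrite ler1n.
have s1g : 1 <= s1 by nra.
have sg : 1 < s by nra.
set a := s1 - 1; set b := s - 1.
have aE : a = s1 - 1 by []. have bE : b = s - 1 by [].
have ca : cc q%:R a = 2.
  rewrite /cc /a; have -> : (q%:R : R) = s1 ^+ 2 + 1 by rewrite ss1; ring.
  ring.
have cb : cc q%:R b = s - s ^+ 2.
  by rewrite /cc /b -ss; ring.
have ab : a <= b.
  rewrite /a /b lerD2r; rewrite -(ler_pXn2r (_ : (0 < 2)%N)) ?nnegrE // ss ss1.
  by rewrite gerBl.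
pose p : {poly R} := - ('X^3 + (1 - q%:R) *: 'X^2 - (3 * q%:R) *: 'X + (q%:R ^+ 2 - q%:R)%:P).
have pE t : p.[t] = - cc q%:R t.
  by rewrite /p /cc !hornerE /=; ring.
have [r /andP[ar rb] rr] : exists2 r, a <= r <= b & root p r.
  apply: poly_ivt => //; rewrite !pE ca cb; apply/andP; split; first by lra.
  nra.
have cr : cc q%:R r = 0 by move: rr; rewrite /root pE oppr_eq0 => /eqP.
have ar' : a < r by rewrite lt_def ar andbT; apply/negP => /eqP e; move: cr; rewrite e ca => /eqP; rewrite pnatr_eq0.
have rb' : r < b.
  rewrite lt_def rb andbT; apply/negP => /eqP e; move: cr; rewrite -e cb => h; nra.
have a0 : 0 <= a by rewrite /a subr_ge0.
exists r; split => //; first by lra.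
move=> t ct.
have [tr|rt] := leP r t; first by apply: le_trans tr _; apply: ler_norm.
have [t0|t0] := leP 0 t.
  (* 0 <= t < r : c decreasing *)
  exfalso.
  have hfac : cc q%:R t - cc q%:R r =
     (t - r) * (t ^+ 2 + t * r + r ^+ 2 + (1 - q%:R) * (t + r) - 3 * q%:R) by rewrite /cc; ring.
  rewrite ct cr subr0 in hfac.
  have hQ : t ^+ 2 + t * r + r ^+ 2 + (1 - q%:R) * (t + r) - 3 * q%:R < 0.
    have rs : r < s by lra.
    have r0 : 0 < r by lra.
    have h1 : r ^+ 2 < q%:R by rewrite -ss; nra.
    have h2 : t ^+ 2 < q%:R by rewrite -ss; nra.
    have h3 : t * r < q%:R by rewrite -ss; nra.
    have h4 : (1 - q%:R) * (t + r) <= 0 by nra.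
    lra.
  have : 0 < (t - r) * (t ^+ 2 + t * r + r ^+ 2 + (1 - q%:R) * (t + r) - 3 * q%:R).
    nra.
  by rewrite -hfac ltxx.
rewrite ltr0_norm //.
have [tb|tb] := leP (- b) t; last by lra.
exfalso; set w := - t.
have w0 : 0 < w by rewrite /w; lra.
have wb : w <= b by rewrite /w; lra.
have hc : cc q%:R t = q%:R ^+ 2 - q%:R - (q%:R - 1) * w ^+ 2 - w ^+ 3 + 3 * q%:R * w.
  by rewrite /cc /w; ring.
have hw2 : w ^+ 2 * (q%:R - 1 + w) <= b ^+ 2 * (q%:R - 1 + b).
  apply: ler_pM; first by nra.
  - by nra.
  - by rewrite ler_pXn2r ?nnegrE //; lra.
  - by lra.
have hb : b ^+ 2 * (q%:R - 1 + b) < q%:R ^+ 2 - q%:R.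
  rewrite /b -ss; nra.
have : 0 < cc q%:R t by rewrite hc; nra.
by rewrite ct ltxx.
Qed.
Lemma eq_from (a b e k : algC) : e = 0 -> a - b = k * e -> a = b.
Proof. by move=> -> h; apply/eqP; rewrite -subr_eq0 h mulr0. Qed.

Lemma eig_construct (q : nat) (P L : finType) (inc : P -> L -> bool)
  (HP : proj_plane q inc) (p0 : P) (l0 : L) (He : inc p0 l0) (zeta : algC) :
  (1 < q)%N -> zeta != 0 -> mcub q%:R (zeta ^+ 2) = 0 ->
  eigenvalue (adj_mx (hatG inc p0 l0)) zeta.
Proof.
move=> q0 zn0 hm; case: HP => A1 A2 A3 A4.
set mu := zeta ^+ 2; set Q : algC := q%:R.
have muq : mu - Q != 0.
  rewrite subr_eq0; apply/negP => /eqP e; move: hm; rewrite -/mu e /mcub.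
  have -> : Q ^+ 3 - (Q ^+ 2 + 4 * Q + 1) * Q ^+ 2 + (2 * Q ^+ 3 + 5 * Q ^+ 2 + 2 * Q) * Q
     - Q ^+ 2 * (Q - 1) ^+ 2 = 4 * Q ^+ 3 by ring.
  by move/eqP; rewrite mulf_eq0 expf_eq0 /= pnatr_eq0 /Q pnatr_eq0 /=; move: q0; case: (q).
pose t0 := mu - 3 * Q.
pose U0 := (mu - Q - 2) * (Q + 1) - 2 * Q + 2.
pose S0 := (mu - Q) ^+ 2 - 4 * Q.
have e1 : (mu - Q - 2) * t0 + 2 * U0 - S0 = 0 by rewrite /t0 /U0 /S0; ring.
have e2 : (2 * Q - 2) * t0 + (mu - Q + 2) * U0 - (Q + 1) * S0 = 0 by rewrite /t0 /U0 /S0; ring.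
have e3 : (2 * Q - 2) * t0 + 2 * U0 + (mu - Q - (Q ^+ 2 + Q + 1)) * S0 = 0.
  rewrite -hm -/mu /t0 /U0 /S0 /mcub; ring.
pose u := fun p => ((inc p l0)%:R : algC).
pose x := fun p => (S0 + (4 * t0 - 2 * U0) * (p == p0)%:R + (- 2 * t0) * u p) / (mu - Q).
have hxp0 : x p0 = t0.
  rewrite /x eqxx /u He; apply: (canLR (mulfK muq)).
  by apply: (eq_from (k := -1) e1); rewrite /=; ring.
have hu0 : u p0 = 1 by rewrite /u He.
have hsu : \sum_p u p = Q + 1 by rewrite /u sum_card A3 -addn1 natrD.
have hsu2 : \sum_p u p * u p = Q + 1.
  by rewrite -hsu; apply: eq_bigr => i _; rewrite /u -natrM mulnb andbb.
have hN := cardI A1 A4 A3 p0.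
have hS : \sum_p x p = S0.
  rewrite /x -mulr_suml.
  rewrite (eq_bigr (fun p => 0 * x p + S0 + (4 * t0 - 2 * U0) * (p == p0)%:R + (- 2 * t0) * u p)); last first.
    by move=> p _; rewrite mul0r add0r.
  rewrite (sum_lin p0 x u) hN hsu mul0r add0r; apply: (canLR (mulfK muq)).
  by apply: (eq_from (k := -1) e3); ring.
have hU : \sum_p u p * x p = U0.
  rewrite /x.
  rewrite (eq_bigr (fun p => (S0 * u p + (4 * t0 - 2 * U0) * (u p * (p == p0)%:R) + (- 2 * t0) * (u p * u p)) / (mu - Q))); last first.
    by move=> p _; rewrite mulrA; congr (_ / _); ring.
  rewrite -mulr_suml !big_split /= -!mulr_sumr sum_delta_r hu0 hsu hsu2.
  apply: (canLR (mulfK muq)).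
  by apply: (eq_from (k := -1) e2); ring.
have gx p : \sum_p' (\sum_l Bm inc p0 l0 p l * Bm inc p0 l0 p' l) * x p' = mu * x p.
  rewrite (gram_apply A1 A4) -/Q hS hxp0 -/u hU.
  have : (mu - Q) * x p = S0 + (4 * t0 - 2 * U0) * (p == p0)%:R + (- 2 * t0) * u p.
    by rewrite /x mulrC mulfVK.
  move=> h; apply/eqP; rewrite -subr_eq0; apply/eqP.
  by move: h => /eqP; rewrite -subr_eq0 => /eqP; rewrite /u => h; rewrite -[RHS]oppr0 -h; ring.
pose y := fun l => (\sum_p Bm inc p0 l0 p l * x p) / zeta.
pose f := fun w : bool * (P + L) =>
  match w with
  | (c, inl p) => if c then x p else - x p
  | (c, inr l) => if c then y l else - y l
  end.
have fA : forall w, f (false, w) = - f (true, w) by case.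
have hf : forall w, \sum_w' f w' * (hatG inc p0 l0 w' w)%:R = zeta * f w.
  case=> c [p|l].
    rewrite (lhsX_anti He c p fA) /=.
    have -> : \sum_l Bm inc p0 l0 p l * y l = zeta * x p.
      rewrite /y.
      rewrite (eq_bigr (fun l => (\sum_p' Bm inc p0 l0 p l * Bm inc p0 l0 p' l * x p') / zeta)); last first.
        by move=> l _; rewrite mulrA mulr_sumr; congr (_ / _); apply: eq_bigr => p' _; rewrite mulrA.
      rewrite -mulr_suml exchange_big /=.
      rewrite (eq_bigr (fun p' => (\sum_l Bm inc p0 l0 p l * Bm inc p0 l0 p' l) * x p')); last first.
        by move=> p' _; rewrite mulr_suml.
      by rewrite gx /mu expr2; field.
    by case: c; ring.
  rewrite (lhsY_anti He c l fA) /=.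
  have -> : \sum_p Bm inc p0 l0 p l * x p = zeta * y l by rewrite /y mulrC mulfVK.
  by case: c; ring.
apply/eigenvalueP.
exists (\row_i f (enum_val i)).
  apply/rowP => j; rewrite !mxE.
  rewrite (reindex enum_rank) /=; last by apply: onW_bij; apply: enum_rank_bij.
  rewrite -hf; apply: eq_bigr => w _; rewrite !mxE !enum_rankK //.
apply/negP => /eqP /rowP h.
have x0 : forall p, x p = 0.
  move=> p; have := h (enum_rank (true, inl p)); rewrite !mxE enum_rankK //.
have : t0 = 0 /\ U0 = 0 /\ S0 = 0.
  split; first by rewrite -hxp0 x0.
  split; first by rewrite -hU big1 // => p _; rewrite x0 mulr0.
  by rewrite -hS big1.
rewrite /t0 /U0 /S0 => -[h1 [h2 h3]].
have hmu : mu = 3 * Q by apply/eqP; rewrite -subr_eq0 h1.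
move: h3; rewrite hmu => /eqP; apply/negP.
have -> : (3 * Q - Q) ^+ 2 - 4 * Q = 4 * Q * (Q - 1) by ring.
rewrite !mulf_eq0 /Q !pnatr_eq0 subr_eq0 pnatr_eq1 /=.
by move: q0; case: (q) => [|[|n]].
Qed.
Lemma cc_val (q : nat) (t : algR) :
  algRval (cc q%:R t) = cc q%:R (algRval t).
Proof.
by rewrite /cc !(rmorphB, rmorphD, rmorphM, rmorphXn, rmorph_nat, rmorph1).
Qed.

Lemma mcub_cc (Q t : algC) : mcub Q (t ^+ 2) = - (cc Q t * cc Q (- t)).
Proof. by rewrite /mcub /cc; ring. Qed.

Lemma sqrtC_algR (x : algR) : 0 <= x -> sqrtC (algRval x) = algRval (Num.sqrt x).
Proof.
move=> x0; apply/eqP; rewrite -(@eqrXn2 _ 2) //.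
- by rewrite sqrtCK -rmorphXn sqr_sqrtr.
- by rewrite sqrtC_ge0.
- by have : 0 <= Num.sqrt x := sqrtr_ge0 x.
Qed.

Lemma valN (q : nat) : algRval (q%:R) = q%:R.
Proof. by rewrite rmorph_nat. Qed.
Unset Implicit Arguments.
Theorem mainTheorem8 (q : nat)
  (Hq : exists p k : nat, [/\ prime p, (0 < k)%N & q = (p ^ k)%N])
  (P L : finType) (inc : P -> L -> bool) (HP : proj_plane q inc)
  (p0 : P) (l0 : L) (He : inc p0 l0) :
  let R := HL_index (adj_mx (hatG inc p0 l0)) in
  [/\ sqrtC (q%:R - 1) - 1 < R, R < sqrtC q%:R - 1 &
      root ('X^3 + (1 - q%:R) *: 'X^2 - (3 * q)%:R *: 'X
            + ((q ^ 2 - q)%N)%:R%:P : {poly algC}) R].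
Proof.
have hq2 : (1 < q)%N.
  case: Hq => p [k [pp k0 ->]]; case: k k0 => // k _.
  rewrite expnS; apply: leq_trans (prime_gt1 pp) _.
  by apply: leq_pmulr; rewrite expn_gt0 prime_gt0.
have [r' [r0' ha hb hc hmin]] := @cubic_real algR q hq2.
set r : algC := algRval r'.
set M := adj_mx (hatG inc p0 l0).
have hm : mcub q%:R (r ^+ 2) = 0 by rewrite mcub_cc /r -cc_val hc rmorph0 mul0r oppr0.
have rn0 : r != 0 by rewrite /r fmorph_eq0 gt_eqF.
have evr := eig_construct HP He hq2 rn0 hm.
have hm' : mcub q%:R ((- r) ^+ 2) = 0 by rewrite sqrrN.
have rn0' : - r != 0 by rewrite oppr_eq0.
have evnr := eig_construct HP He hq2 rn0' hm'.
set s := projT1 (closed_field_poly_normal (char_poly M)).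
have hs : char_poly M = lead_coef (char_poly M) *: \prod_(z <- s) ('X - z%:P) :=
  projT2 (closed_field_poly_normal (char_poly M)).
have hs' : char_poly M = \prod_(z <- s) ('X - z%:P).
  by rewrite hs (monicP (char_poly_monic M)) scale1r.
have memS z : (z \in s) = eigenvalue M z.
  by rewrite eigenvalue_root_char hs' root_prod_XsubC.
have sym : forall i j, M i j = M j i by move=> i j; rewrite !mxE hatG_sym.
have rl : forall i j, (M i j)^* = M i j by move=> i j; rewrite !mxE conjC_nat.
have realS z : z \in s -> z \is Creal.
  by rewrite memS => /eigenvalueP [v hv vn0]; apply: sym_real_eig sym rl hv vn0.
have boundS z : z \in s -> r <= `|z|.
  move=> zs; have zr := realS z zs.
  move: zs; rewrite memS => /eigenvalueP [v hv vn0].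
  pose z' := in_algR zr.
  have zE : z = algRval z' by [].
  suff : r' <= `|z'| by [].
  case: (eigen_main HP He hv vn0) => h.
  - have h' : z' ^+ 2 = q%:R.
      apply: val_inj; change (algRval (z' ^+ 2) = algRval q%:R).
      by rewrite rmorphXn rmorph_nat; exact: h.
    have sq := sqr_sqrtr (ler0n algR q); have sg := sqrtr_ge0 (q%:R : algR).
    have nz := normr_ge0 z'; have nz2 : `|z'| ^+ 2 = q%:R by rewrite real_normK ?num_real.
    nra.
  - have h' : z' ^+ 2 = (q%:R + 1) ^+ 2.
      apply: val_inj; change (algRval (z' ^+ 2) = algRval ((q%:R + 1) ^+ 2)).
      by rewrite !rmorphXn rmorphD rmorph_nat rmorph1; exact: h.
    have sq := sqr_sqrtr (ler0n algR q); have sg := sqrtr_ge0 (q%:R : algR).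
    have nz := normr_ge0 z'; have nz2 : `|z'| ^+ 2 = (q%:R + 1) ^+ 2 by rewrite real_normK ?num_real.
    have q1 : (2 : algR) <= q%:R by rewrite (ler_nat algR 2 q).
    nra.
  - have : cc q%:R z * cc q%:R (- z) = 0.
      by apply/eqP; rewrite -oppr_eq0 -mcub_cc h.
    move/eqP; rewrite mulf_eq0 => /orP [] /eqP h1.
      apply: hmin; apply: val_inj; change (algRval (cc q%:R z') = algRval 0).
      by rewrite cc_val rmorph0; exact: h1.
    rewrite -normrN; apply: hmin; apply: val_inj.
    change (algRval (cc q%:R (- z')) = algRval 0).
    by rewrite cc_val rmorphN rmorph0; exact: h1.
have rs : r \in s by rewrite memS.
have nrs : - r \in s by rewrite memS.
have r0 : 0 < r by [].
set k := (#|P| + #|L|)%N.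
have hn : #|{: bool * (P + L)}| = k.*2 by rewrite card_prod card_bool card_sum mul2n.
have hsz : size s = k.*2.
  have := size_char_poly M; rewrite hs' size_prod_XsubC => -[->].
  by rewrite -hn.
pose sg := fun i : 'I_#|{: bool * (P + L)}| => if enum_val i is (_, inl _) then true else false.
have hA : forall i j, sg i = sg j -> M i j = 0.
  move=> i j; rewrite /sg !mxE; case: (enum_val i) => c [p|l]; case: (enum_val j) => c' [p'|l'] //.
have hcomp := charpoly_comp_opp hA.
have pe : perm_eq (map -%R s) s.
  apply: (roots_sym hs'); rewrite hcomp hsz -hn //.
have hcnt : count (fun z : algC => 0 < z) s = k.
  have c1 : count (fun z : algC => 0 < z) s = count (fun z : algC => z < 0) s.
    rewrite -(permP pe) count_map; apply: eq_count => z /=; by rewrite oppr_gt0.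
  have c2 : count (fun z : algC => 0 < z) s + count (fun z : algC => z < 0) s = size s.
    rewrite -(count_predC (fun z : algC => 0 < z)); congr (_ + _)%N.
    apply: eq_in_count => z zs /=.
    have zr := realS z zs; have zn := boundS z zs.
    have zn0 : z != 0 by apply: contraTneq zn => ->; rewrite normr0 (lt_geF r0).
    by rewrite real_ltNge ?real0 // le_eqVlt eq_sym (negPf zn0).
  move: c2; rewrite -c1 hsz -addnn => h; apply: (can_inj doubleK); rewrite -!addnn.
  exact: h.
have hmax := hl_sort hsz realS boundS r0 rs nrs hcnt.
have HL : HL_index M = r.
  rewrite /HL_index /eigenvalues -/s.
  have i1 : ((#|{: bool * (P + L)}|.+1 %/ 2).-1 = k.-1)%N.
    by rewrite hn divn2 /= uphalf_double.
  have i2 : ((#|{: bool * (P + L)}|.+2 %/ 2).-1 = k)%N.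
    by rewrite hn divn2 /= doubleK.
  by rewrite i1 i2.
move=> R; rewrite /R HL.
have q1 : (1 <= q)%N by apply: ltnW.
split.
- have e1 : sqrtC (q%:R - 1) = algRval (Num.sqrt (q%:R - 1)).
    by rewrite -sqrtC_algR ?rmorphB ?rmorph_nat ?rmorph1 // subr_ge0 ler1n.
  have h : algRval (Num.sqrt (q%:R - 1) - 1) < algRval r' := ha.
  by rewrite e1; move: h; rewrite rmorphB rmorph1.
- have e1 : sqrtC q%:R = algRval (Num.sqrt q%:R).
    by rewrite -sqrtC_algR ?rmorph_nat // ler0n.
  have h : algRval r' < algRval (Num.sqrt q%:R - 1) := hb.
  by rewrite e1; move: h; rewrite rmorphB rmorph1.
- have hcr : cc q%:R r = 0 by rewrite /r -cc_val hc rmorph0.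
  apply/eqP; rewrite !hornerE /=.
  have -> : ((q ^ 2 - q)%N%:R : algC) = q%:R ^+ 2 - q%:R.
    by rewrite natrB ?natrX // expnS expn1 leq_pmulr.
  rewrite natrM -hcr /cc; ring.
Qed.
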